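(* Let $\mathbb{M}=(M_p)_{p\in\mathbb{N}_0}$ be a sequence of positive real numbers with $M_0=1$ such that $\widehat{\mathbb{M}}=(p!M_p)_{p\in\mathbb{N}_0}$ is a weight sequence and $\lim_{p\to\infty}M_p^{1/p}=\infty$. Assume that $\gamma(\omega_{\widehat{\mathbb{M}}})>1$. Then $\gamma(\omega_{\widehat{\mathbb{M}}})=\gamma(\omega_{\mathbb{M}})+1$.
   Context: A weight sequence is a sequence $\mathbb{L}=(L_p)_{p\in\mathbb{N}_0}$ of positive reals with $L_0=1$, $L_p^2\le L_{p-1}L_{p+1}$ for $p\ge1$, and $\lim_{p\to\infty}L_p^{1/p}=\infty$. For a positive sequence $\mathbb{L}$ with $L_0=1$, its associated function is $\omega_{\mathbb{L}}(t):=\sup_{p\in\mathbb{N}_0}\log(t^p/L_p)$ for $t>0$ and $\omega_{\mathbb{L}}(0)=0$. For a nondecreasing $\sigma:[0,\infty)\to[0,\infty)$ with $\sigma(t)\to\infty$ and $\gamma>0$, say $(P_{\sigma,\gamma})$ holds if there is $K>1$ with $\limsup_{t\to\infty}\sigma(K^{\gamma}t)/\sigma(t)<K$; $\gamma(\sigma):=\sup\{\gamma>0:(P_{\sigma,\gamma})\text{ holds}\}$, and $\gamma(\sigma):=0$ if none holds. *)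

(* Defs.v *)
From HB Require Import structures.
From mathcomp Require Import all_boot all_order all_algebra.
From mathcomp Require Import all_classical all_reals all_analysis.
Set Implicit Arguments. Unset Strict Implicit. Unset Printing Implicit Defensive.
Import Order.TTheory GRing.Theory Num.Theory.
Import numFieldNormedType.Exports.
Local Open Scope classical_set_scope.
Local Open Scope ring_scope.

Definition root_unbounded (R : realType) (L : nat -> R) : Prop :=
  (fun p : nat => L p `^ (p%:R)^-1) @ \oo --> +oo.

Definition weight_seq (R : realType) (L : nat -> R) : Prop :=
  [/\ forall p, 0 < L p,
      L 0%N = 1,
      forall p : nat, L p.+1 ^+ 2 <= L p * L p.+2
    & root_unbounded L].

Definition assoc_fun (R : realType) (L : nat -> R) (t : R) : R :=
  if t == 0 then 0 else sup (range (fun p : nat => ln (t ^+ p / L p))).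

Definition P_prop (R : realType) (sigma : R -> R) (g : R) : Prop :=
  exists K : R, 1 < K /\
    (limf_esup (fun t : R => (sigma (K `^ g * t) / sigma t)%:E) (pinfty_nbhs R)
      < K%:E)%E.

(* gamma(sigma) = sup {gamma > 0 : (P_{sigma,gamma})}, and 0 if no such gamma.
   Taking the sup of {0} together with these (positive) gammas gives exactly
   this (value in the extended reals, possibly +oo). *)
Definition gamma_index (R : realType) (sigma : R -> R) : \bar R :=
  ereal_sup ([set 0%E] `|` [set g%:E | g in [set g : R | 0 < g /\ P_prop sigma g]]).

(* Main.v *)
Require Import Defs.
From HB Require Import structures.
From mathcomp Require Import all_boot all_order all_algebra.
From mathcomp Require Import all_classical all_reals all_analysis.
From mathcomp Require Import ring lra.
Import Order.TTheory GRing.Theory Num.Theory.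
Import numFieldNormedType.Exports.
Local Open Scope classical_set_scope.
Local Open Scope ring_scope.
Set Implicit Arguments. Unset Strict Implicit.

Local Notation Mh M := (fun p : nat => (p`!%:R * M p)%R).

Lemma exists_nat_gt (R : realType) (x : R) : exists n : nat, x < n%:R.
Proof.
exists (Num.Def.archi_bound `|x|).
apply: le_lt_trans (ler_norm x) _; exact: archi_boundP.
Qed.

Lemma finite_ub (R : realType) (a : nat -> R) (N : nat) :
  exists B, forall p, (p < N)%N -> a p <= B.
Proof.
elim: N => [|N [B HB]]; first by exists 0.
exists (Num.max B (a N)) => p; rewrite ltnS leq_eqVlt => /orP[/eqP->|/HB h].
  by rewrite le_max lexx orbT.
by rewrite le_max h.
Qed.

Lemma om_bnd (R : realType) (L : nat -> R) : (forall p, 0 < L p) ->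
  root_unbounded L -> forall t, 0 < t -> exists B, forall p, ln (t ^+ p / L p) <= B.
Proof.
move=> Lp Lub t t0.
have /cvgryPge/(_ t) := Lub; case=> N _ HN.
have [B HB] := @finite_ub _ (fun p => ln (t ^+ p / L p)) N.+1.
exists (Num.max B 0) => p.
case: (ltnP p N.+1) => hp; first by rewrite le_max HB.
rewrite le_max; apply/orP; right; apply: ln_le0.
have p0 : (0 < p)%N by apply: leq_trans hp.
have := HN p (ltnW hp) => /= htp.
rewrite ler_pdivrMr // mul1r.
have -> : L p = (L p `^ (p%:R)^-1) ^+ p.
  rewrite -powR_mulrn ?powR_ge0 // -powRrM mulVf ?powRr1 ?(ltW (Lp p)) //.
  by rewrite pnatr_eq0 -lt0n.
by apply: lerXn2r => //; rewrite nnegrE ?(ltW t0) ?powR_ge0.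
Qed.

Lemma om_ge (R : realType) (L : nat -> R) : (forall p, 0 < L p) ->
  root_unbounded L -> forall t p, 0 < t -> ln (t ^+ p / L p) <= assoc_fun L t.
Proof.
move=> Lp Lub t p t0; rewrite /assoc_fun gt_eqF //.
have [B HB] := om_bnd Lp Lub t0.
apply: ub_le_sup; last by exists p.
by exists B => _ [q _ <-].
Qed.

Lemma om_le (R : realType) (L : nat -> R) t B : 0 < t ->
  (forall p, ln (t ^+ p / L p) <= B) -> assoc_fun L t <= B.
Proof.
move=> t0 HB; rewrite /assoc_fun gt_eqF //.
apply: ge_sup; first by exists (ln (t ^+ 0 / L 0)), 0%N.
by move=> _ [q _ <-].
Qed.

Lemma om_mono (R : realType) (L : nat -> R) : (forall p, 0 < L p) ->
  root_unbounded L -> forall s t, 0 < s -> s <= t -> assoc_fun L s <= assoc_fun L t.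
Proof.
move=> Lp Lub s t s0 st.
have t0 : 0 < t by apply: lt_le_trans st.
apply: om_le => // p; apply: le_trans (om_ge Lp Lub p t0).
rewrite ler_ln ?posrE ?divr_gt0 ?exprn_gt0 //.
by rewrite ler_pM2r ?invr_gt0 // lerXn2r // nnegrE ltW.
Qed.

Lemma om_pos (R : realType) (L : nat -> R) : (forall p, 0 < L p) ->
  root_unbounded L -> forall t, L 1%N < t -> 0 < assoc_fun L t.
Proof.
move=> Lp Lub t Lt.
have t0 : 0 < t by apply: lt_trans Lt.
apply: lt_le_trans (om_ge Lp Lub 1 t0).
by rewrite expr1 ln_gt0 // ltr_pdivlMr // mul1r.
Qed.

Lemma om_ge0 (R : realType) (L : nat -> R) : (forall p, 0 < L p) ->
  root_unbounded L -> L 0%N = 1 -> forall t, 0 < t -> 0 <= assoc_fun L t.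
Proof.
move=> Lp Lub L0 t t0; apply: le_trans (om_ge Lp Lub 0 t0).
by rewrite expr0 L0 divr1 ln1.
Qed.

Lemma expR_pow (R : realType) (u : R) p : 0 <= u -> u ^+ p / p`!%:R <= expR u.
Proof.
move=> u0; case: p => [|n].
  by rewrite expr0 fact0 divr1; apply: le_trans (expR_ge1Dx u); rewrite lerDl.
by apply: le_trans (expR_ge1Dxn n u0); rewrite lerDr.
Qed.

Lemma fact_le (q : nat) : (q`! <= q ^ q)%N.
Proof.
elim: q => // n IH; rewrite factS expnS leq_mul2l; apply/orP; right.
have H : (n ^ n <= n.+1 ^ n)%N by case: n {IH} => // n; rewrite leq_exp2r.
exact: leq_trans IH H.
Qed.

Lemma U_ineq (R : realType) (M : nat -> R) :
  (forall p, 0 < M p) -> root_unbounded M -> forall s u, 0 < s -> 0 < u ->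
  assoc_fun (fun p : nat => (p`!%:R * M p)%R) s <= assoc_fun M (s / u) + u.
Proof.
move=> Mp Mub s u s0 u0.
apply: om_le => // p.
have su0 : 0 < s / u by rewrite divr_gt0.
have a0 : 0 < (s / u) ^+ p / M p by rewrite divr_gt0 ?exprn_gt0.
have b0 : 0 < u ^+ p / p`!%:R by rewrite divr_gt0 ?exprn_gt0 // ltr0n fact_gt0.
have -> : s ^+ p / (p`!%:R * M p) = ((s / u) ^+ p / M p) * (u ^+ p / p`!%:R).
  have hu : u != 0 by rewrite gt_eqF.
  have hM : M p != 0 by rewrite gt_eqF.
  have hf : p`!%:R != 0 :> R by rewrite pnatr_eq0 -lt0n fact_gt0.
  rewrite expr_div_n; field; by rewrite ?hu ?hM ?hf ?expf_neq0.
rewrite lnM ?posrE //; apply: lerD; first exact: om_ge.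
rewrite -[leRHS]expRK ler_ln ?posrE ?expR_gt0 //; exact/expR_pow/ltW.
Qed.

Definition Step (R : realType) (s : R -> R) (mu ka : R) :=
  exists t0, 0 < t0 /\ forall t, t0 <= t -> s (mu * t) <= ka * s t.

Lemma Step_iter (R : realType) (s : R -> R) mu ka : Step s mu ka -> 1 <= mu -> 0 <= ka ->
  exists t0, 0 < t0 /\ forall n t, t0 <= t -> s (mu ^+ n * t) <= ka ^+ n * s t.
Proof.
move=> [t0 [t00 H]] mu1 ka0; exists t0; split => // n t tt0.
have tp : 0 < t by apply: lt_le_trans tt0.
elim: n => [|n IH]; first by rewrite !expr0 !mul1r.
rewrite exprS -mulrA; apply: le_trans (H _ _) _.
  by apply: le_trans tt0 _; rewrite ler_pMl ?exprn_ege1.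
by rewrite exprS -mulrA ler_wpM2l.
Qed.

Lemma pow_unbounded (R : realType) (rho y : R) : 1 < rho -> exists k : nat, y < rho ^+ k.
Proof.
move=> r1; have r0 : 0 < rho by apply: lt_trans r1.
case: (lerP y 0) => y0; first by exists 0%N; rewrite expr0; apply: le_lt_trans y0 _.
have [n Hn] := exists_nat_gt (ln y / ln rho).
exists n; rewrite -ltr_ln ?posrE ?exprn_gt0 // lnXn // -mulr_natr.
by rewrite -ltr_pdivrMl ?ln_gt0 // mulrC.
Qed.


Lemma Mh_pos (R : realType) (M : nat -> R) : (forall p, 0 < M p) -> forall p, 0 < Mh M p.
Proof. by move=> Mp p; rewrite mulr_gt0 // ltr0n fact_gt0. Qed.

Lemma keyK (R : realType) (M : nat -> R) : (forall p, 0 < M p) -> M 0%N = 1 ->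
  root_unbounded M -> root_unbounded (Mh M) ->
  forall mu0 ka0, Step (assoc_fun (Mh M)) mu0 ka0 -> 1 < mu0 -> 0 <= ka0 -> ka0 <= mu0 ->
  exists t1, 0 < t1 /\ forall t, t1 <= t -> 0 < assoc_fun (Mh M) t /\
    assoc_fun M (t / (expR 1 * mu0 * assoc_fun (Mh M) t)) <= assoc_fun (Mh M) t.
Proof.
move=> Mp M0 Mub Hub mu0 ka0 St mu1 ka0p kamu.
have Hp := Mh_pos Mp.
have mu0p : 0 < mu0 by apply: lt_trans mu1.
have [t0 [t00 It]] := Step_iter St (ltW mu1) ka0p.
exists (Num.max t0 (M 1%N + 1)); split; first by rewrite lt_max t00.
move=> t; rewrite ge_max => /andP[tt0 tM].
have t0p : 0 < t := lt_le_trans t00 tt0.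
have gp : 0 < assoc_fun (Mh M) t.
  apply: om_pos => //=; rewrite (_ : (1`!)%:R = 1 :> R) // mul1r; apply: lt_le_trans tM.
  by rewrite ltrDl.
split => //.
have A0 : 0 < expR 1 * mu0 * assoc_fun (Mh M) t by rewrite !mulr_gt0 ?expR_gt0.
set gt := assoc_fun (Mh M) t in gp A0 *.
set r := t / (expR 1 * mu0 * gt).
have r0 : 0 < r by rewrite divr_gt0.
apply: om_le => // -[|n].
  by rewrite expr0 M0 divr1 ln1; apply: ltW.
set qq : R := n.+1%:R.
have q0 : 0 < qq by rewrite ltr0n.
set x := expR 1 * qq * r.
have x0 : 0 < x.
  by apply: mulr_gt0 => //; apply: mulr_gt0 => //; exact: expR_gt0.
have fp : 0 < (n.+1)`!%:R :> R by rewrite ltr0n fact_gt0.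
have S1 : r ^+ n.+1 / M n.+1 <= (x ^+ n.+1 / ((n.+1)`!%:R * M n.+1)) * expR (- qq).
  have -> : (x ^+ n.+1 / ((n.+1)`!%:R * M n.+1)) * expR (- qq) =
      (r ^+ n.+1 / M n.+1) * (qq ^+ n.+1 / (n.+1)`!%:R).
    rewrite /x !exprMn -expRM_natl mulr1 expRN.
    have h1 : expR qq != 0 by rewrite gt_eqF ?expR_gt0.
    have h2 : M n.+1 != 0 by rewrite gt_eqF.
    have h3 : (n.+1)`!%:R != 0 :> R by rewrite gt_eqF.
    by field; rewrite h1 h2 h3.
  rewrite ler_pMr ?divr_gt0 ?exprn_gt0 // ler_pdivlMr // mul1r /qq -natrX ler_nat.
  exact: fact_le.
have S2 : assoc_fun (Mh M) x <= gt + qq.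
  case: (lerP x t) => xt.
    apply: le_trans (om_mono Hp Hub x0 xt) _; by rewrite lerDl ltW.
  set lam := x / t.
  have lam1 : 1 < lam by rewrite /lam ltr_pdivlMr // mul1r.
  have ex : exists N, lam <= mu0 ^+ N.
    by have [N HN] := pow_unbounded lam mu1; exists N; apply: ltW.
  case: (ex_minnP ex) => N HN Hmin.
  case: N HN Hmin => [|k] HN Hmin.
    by rewrite expr0 in HN; move: (lt_le_trans lam1 HN); rewrite ltxx.
  have Hk : mu0 ^+ k < lam.
    rewrite ltNge; apply/negP => H; have := Hmin k H; by rewrite ltnn.
  have G1 : assoc_fun (Mh M) x <= ka0 ^+ k.+1 * gt.
    apply: le_trans (It k.+1 t tt0); apply: om_mono => //.
    have -> : x = lam * t by rewrite /lam divfK // gt_eqF.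
    by rewrite ler_pM2r.
  have G2 : ka0 ^+ k.+1 * gt <= qq.
    have -> : qq = mu0 * lam * gt.
      rewrite /lam /x /r.
      have h1 : expR 1 != 0 :> R by rewrite gt_eqF ?expR_gt0.
      have h2 : mu0 != 0 by rewrite gt_eqF.
      have h3 : gt != 0 by rewrite gt_eqF.
      have h4 : t != 0 by rewrite gt_eqF.
      by field; rewrite h1 h2 h3 h4.
    rewrite ler_pM2r //.
    apply: le_trans (lerXn2r k.+1 _ _ kamu) _; rewrite ?nnegrE ?(ltW mu0p) //.
    by rewrite exprS ler_pM2l // ltW.
  apply: le_trans G1 _; apply: le_trans G2 _; by rewrite lerDr ltW.
apply: le_trans (_ : ln ((x ^+ n.+1 / ((n.+1)`!%:R * M n.+1)) * expR (- qq)) <= _).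
  have p1 : 0 < r ^+ n.+1 / M n.+1 by rewrite divr_gt0 ?exprn_gt0.
  have p2 : 0 < x ^+ n.+1 / ((n.+1)`!%:R * M n.+1) * expR (- qq).
    by rewrite mulr_gt0 ?expR_gt0 // divr_gt0 ?exprn_gt0 ?Hp.
  by rewrite ler_ln ?posrE.
rewrite lnM ?posrE ?divr_gt0 ?exprn_gt0 ?expR_gt0 // expRK.
apply: le_trans (_ : assoc_fun (Mh M) x - qq <= _).
  by rewrite lerD2r; apply: om_ge.
by rewrite lerBlDr.
Qed.


Lemma h_unb (R : realType) (M : nat -> R) : (forall p, 0 < M p) -> M 0%N = 1 ->
  root_unbounded M -> root_unbounded (Mh M) ->
  forall mu0 ka0, Step (assoc_fun (Mh M)) mu0 ka0 -> 1 < mu0 -> 0 < ka0 -> ka0 < mu0 ->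
  forall B, 0 <= B -> exists T, 0 < T /\ forall t, T <= t ->
    0 < assoc_fun (Mh M) t /\ B <= t / assoc_fun (Mh M) t.
Proof.
move=> Mp M0 Mub Hub mu0 ka0 St mu1 ka0p kamu B B0.
have Hp := Mh_pos Mp.
have mu0p : 0 < mu0 by apply: lt_trans mu1.
have [t0 [t00 It]] := Step_iter St (ltW mu1) (ltW ka0p).
set t0' := Num.max t0 (M 1%N + 1).
have t0'p : 0 < t0' by rewrite lt_max t00.
have t0t0' : t0 <= t0' by rewrite le_max lexx.
have gpos : forall s, t0' <= s -> 0 < assoc_fun (Mh M) s.
  move=> s; rewrite ge_max => /andP[_ sM].
  apply: om_pos => //=; rewrite (_ : (1`!)%:R = 1 :> R) // mul1r; apply: lt_le_trans sM.
  by rewrite ltrDl.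
set f1 := assoc_fun M 1.
have f10 : 0 <= f1 by apply: om_ge0.
have rho1 : 1 < mu0 / ka0 by rewrite ltr_pdivlMr // mul1r.
have [k Hk] := pow_unbounded (B * (f1 + t0') / t0') rho1.
exists (mu0 ^+ k * t0'); split; first by rewrite mulr_gt0 ?exprn_gt0.
move=> t Tt.
have muk : 0 < mu0 ^+ k by rewrite exprn_gt0.
set s := t / mu0 ^+ k.
have ts : t = mu0 ^+ k * s by rewrite /s mulrC divfK // gt_eqF.
have s0 : t0' <= s by rewrite /s ler_pdivlMr // mulrC.
have sp : 0 < s by apply: lt_le_trans s0.
have gs := gpos s s0.
have st : s <= t.
  by rewrite ts -[leLHS]mul1r ler_pM2r //; apply: exprn_ege1; apply: ltW.
have gt := gpos t (le_trans s0 st).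
split => //.
rewrite ler_pdivlMr //.
have G1 : assoc_fun (Mh M) t <= ka0 ^+ k * (f1 + s).
  rewrite ts; apply: le_trans (It k s (le_trans t0t0' s0)) _.
  rewrite ler_pM2l ?exprn_gt0 //.
  have := U_ineq Mp Mub sp sp; by rewrite divff ?gt_eqF.
apply: le_trans (_ : B * (ka0 ^+ k * (f1 + s)) <= _); first by rewrite ler_wpM2l.
rewrite ts.
have E : mu0 ^+ k = ka0 ^+ k * (mu0 / ka0) ^+ k.
  by rewrite -exprMn mulrC divfK // gt_eqF.
rewrite E mulrCA -mulrA ler_pM2l ?exprn_gt0 //.
apply: le_trans (_ : B * (f1 + t0') / t0' * s <= _); last by rewrite ler_pM2r // ltW.
rewrite -!mulrA ler_wpM2l //.
have q1 : 1 <= t0'^-1 * s by rewrite mulrC ler_pdivlMr // mul1r.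
rewrite mulrDl; apply: lerD.
  by rewrite -[leLHS]mulr1 ler_wpM2l.
by rewrite mulrA mulfV ?gt_eqF // mul1r.
Qed.


Lemma step_i (R : realType) (M : nat -> R) : (forall p, 0 < M p) -> M 0%N = 1 ->
  root_unbounded M -> root_unbounded (Mh M) ->
  forall mu0 ka0, Step (assoc_fun (Mh M)) mu0 ka0 -> 1 < mu0 -> 0 < ka0 -> ka0 < mu0 ->
  forall mu ka, Step (assoc_fun M) mu ka -> 1 <= mu -> 1 <= ka ->
  forall n, Step (assoc_fun (Mh M)) ((ka * mu) ^+ n) ((1 + expR 1 * mu0) * ka ^+ n).
Proof.
move=> Mp M0 Mub Hub mu0 ka0 St0 mu01 ka0p kamu mu ka St mu1 ka1 n.
have kap : 0 < ka by apply: lt_le_trans ka1.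
have mup : 0 < mu by apply: lt_le_trans mu1.
have [r0 [r00 If]] := Step_iter St mu1 (ltW kap).
have [t1 [t1p K]] := keyK Mp M0 Mub Hub St0 mu01 (ltW ka0p) (ltW kamu).
set A := expR 1 * mu0.
have Ap : 0 < A by rewrite mulr_gt0 ?expR_gt0 // (lt_trans _ mu01).
have [T [Tp HT]] := h_unb Mp M0 Mub Hub St0 mu01 ka0p kamu (ltW (mulr_gt0 Ap r00)).
exists (Num.max t1 T); split; first by rewrite lt_max t1p.
move=> t; rewrite ge_max => /andP[tt1 tT].
have [gp Kt] := K t tt1.
have [_ Ht] := HT t tT.
have tp : 0 < t by apply: lt_le_trans tT.
set gt := assoc_fun (Mh M) t in gp Kt Ht *.
set r := t / (A * gt).
have rr0 : r0 <= r.
  rewrite /r ler_pdivlMr ?mulr_gt0 //; rewrite ler_pdivlMr // in Ht; lra.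
have vp : 0 < ka ^+ n * (A * gt) by apply: mulr_gt0; [exact: exprn_gt0 | exact: mulr_gt0].
have := U_ineq Mp Mub (mulr_gt0 (exprn_gt0 n (mulr_gt0 kap mup)) tp) vp.
have -> : (ka * mu) ^+ n * t / (ka ^+ n * (A * gt)) = mu ^+ n * r.
  rewrite /r exprMn.
  have h1 : ka ^+ n != 0 by rewrite gt_eqF ?exprn_gt0.
  have h2 : A != 0 by rewrite gt_eqF.
  have h3 : gt != 0 by rewrite gt_eqF.
  by field; rewrite ?h1 ?h2 ?h3.
move=> H; apply: le_trans H _.
apply: le_trans (lerD (If n r rr0) (lexx _)) _.
have Kt' : assoc_fun M r <= gt by rewrite /r /A -mulrA in Kt *.
apply: le_trans (_ : ka ^+ n * gt + ka ^+ n * (A * gt) <= _).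
  by rewrite lerD2r ler_wpM2l // exprn_ge0 // ltW.
lra.
Qed.


Lemma step_ii (R : realType) (M : nat -> R) : (forall p, 0 < M p) -> M 0%N = 1 ->
  root_unbounded M -> root_unbounded (Mh M) ->
  forall mu ka, Step (assoc_fun (Mh M)) mu ka -> 1 < mu -> 0 < ka -> ka < mu ->
  exists c, 0 < c /\ forall m,
    Step (assoc_fun M) ((mu / ka) ^+ m * (c / (expR 1 * mu))) (2 * ka ^+ m).
Proof.
move=> Mp M0 Mub Hub mu ka St mu1 kap kamu.
have Hp := Mh_pos Mp.
have mup : 0 < mu by apply: lt_trans mu1.
have [t0 [t00 It]] := Step_iter St (ltW mu1) (ltW kap).
have [t1 [t1p K]] := keyK Mp M0 Mub Hub St mu1 (ltW kap) (ltW kamu).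
set A := expR 1 * mu.
have Ap : 0 < A by rewrite mulr_gt0 ?expR_gt0.
set T0 := Num.max t0 t1.
have T0p : 0 < T0 by rewrite lt_max t00.
have T0t0 : t0 <= T0 by rewrite le_max lexx.
have T0t1 : t1 <= T0 by rewrite le_max lexx orbT.
set g := assoc_fun (Mh M).
have gp : forall t, T0 <= t -> 0 < g t.
  by move=> t tT; have [] := K t (le_trans T0t1 tT).
have rk1 : 1 < mu / ka by rewrite ltr_pdivlMr // mul1r.
have [j Hj] := pow_unbounded 2 rk1.
set rho := mu ^+ j.
have rho1 : 1 <= rho by apply: exprn_ege1; apply: ltW.
have rhop : 0 < rho by apply: lt_le_trans rho1.
exists (2 * rho)^-1; split; first by rewrite invr_gt0 mulr_gt0.
move=> m.
have h3 : forall m t, T0 <= t -> (mu / ka) ^+ m * (t / g t) <= (mu ^+ m * t) / g (mu ^+ m * t).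
  move=> k t tT.
  have tp : 0 < t by apply: lt_le_trans tT.
  have gt0 := gp t tT.
  have tmt : t <= mu ^+ k * t by rewrite -[leLHS]mul1r ler_pM2r //; apply: exprn_ege1; apply: ltW.
  have gt1 := gp _ (le_trans tT tmt).
  have Ik := It k t (le_trans T0t0 tT).
  rewrite ler_pdivlMr //.
  apply: le_trans (_ : (mu / ka) ^+ k * (t / g t) * (ka ^+ k * g t) <= _).
    by rewrite ler_wpM2l // mulr_ge0 // ?exprn_ge0 ?divr_ge0 ?ltW.
  rewrite exprMn exprVn.
  have h1 : ka ^+ k != 0 by rewrite gt_eqF ?exprn_gt0.
  have h2 : g t != 0 by rewrite gt_eqF.
  rewrite le_eqVlt; apply/orP; left; apply/eqP; by field; rewrite ?h1 ?h2.
have h1 : forall t, T0 <= t -> (rho * t) / g (rho * t) <= rho * (t / g t).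
  move=> t tT.
  have tp : 0 < t by apply: lt_le_trans tT.
  have tmt : t <= rho * t by rewrite -[leLHS]mul1r ler_pM2r.
  have gt0 := gp t tT.
  have gt1 := gp _ (le_trans tT tmt).
  rewrite -mulrA ler_pM2l // ler_pM2l // lef_pV2 ?posrE //.
  exact: om_mono.
have h2 : forall t, T0 <= t -> 2 * (t / g t) <= (rho * t) / g (rho * t).
  move=> t tT; apply: le_trans (h3 j t tT).
  by rewrite ler_pM2r ?ltW // divr_gt0 ?gp // (lt_le_trans T0p).
set hT := T0 / g T0.
have hTp : 0 < hT by rewrite divr_gt0 ?gp.
exists (2 * hT); split; first by rewrite mulr_gt0.
move=> r rr0.
have rp : 0 < r by apply: lt_le_trans rr0; rewrite mulr_gt0.
set s := fun k : nat => rho ^+ k * T0.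
have sT : forall k, T0 <= s k.
  by move=> k; rewrite /s -[leLHS]mul1r ler_pM2r // exprn_ege1.
have hs : forall k, 2 ^+ k * hT <= s k / g (s k).
  elim=> [|k IH]; first by rewrite /s expr0 !mul1r.
  have E : s k.+1 = rho * s k by rewrite /s exprS mulrA.
  rewrite E; apply: le_trans _ (h2 _ (sT k)).
  by rewrite exprS -mulrA ler_pM2l.
have two1 : 1 < 2 :> R by rewrite ltr1n.
have [k0 Hk0] := pow_unbounded (r / (2 * hT)) two1.
have ex : exists k, r / 2 < s k / g (s k).
  exists k0; apply: lt_le_trans (hs k0).
  by rewrite ltr_pdivrMr // in Hk0; lra.
case: (ex_minnP ex) => N HN Hmin.
case: N HN Hmin => [|k] HN Hmin.
  exfalso; move: HN; rewrite /s expr0 mul1r -/hT; apply/negP; rewrite -leNgt.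
  by rewrite ler_pdivlMr // mulrC.
have Hk : s k / g (s k) <= r / 2.
  rewrite leNgt; apply/negP => H; have := Hmin k H; by rewrite ltnn.
have Hk1 : r / 2 < rho * (s k / g (s k)).
  have E : s k.+1 = rho * s k by rewrite /s exprS mulrA.
  by apply: lt_le_trans HN _; rewrite E; apply: h1 (sT k).
set t1' := s k.
have t1'p : 0 < t1' by apply: lt_le_trans (sT k).
have g1p := gp t1' (sT k).
have F1 : g t1' <= 2 * assoc_fun M r.
  have := U_ineq Mp Mub t1'p (divr_gt0 t1'p rp).
  have E : t1' / (t1' / r) = r.
    have e1 : t1' != 0 by rewrite gt_eqF.
    have e2 : r != 0 by rewrite gt_eqF.
    by field; rewrite ?e1 ?e2.
  rewrite E => H.
  have H2 : t1' / r <= g t1' / 2.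
    rewrite ler_pdivrMr // -/t1' in Hk.
    rewrite ler_pdivrMr //; lra.
  rewrite -/g in H; lra.
set t2 := mu ^+ m * t1'.
have t2T : T0 <= t2.
  by apply: le_trans (sT k) _; rewrite /t2 -[leLHS]mul1r ler_pM2r // exprn_ege1 // ltW.
have F2 : g t2 <= ka ^+ m * g t1' by apply: It; apply: le_trans (sT k).
have F3 : (mu / ka) ^+ m * (2 * rho)^-1 * r <= t2 / g t2.
  apply: le_trans (h3 m t1' (sT k)); rewrite -mulrA ler_pM2l ?exprn_gt0 ?divr_gt0 //.
  rewrite -/t1' in Hk1; rewrite mulrC ler_pdivrMr ?mulr_gt0 //.
  move: Hk1; set X := t1' / g t1'; move=> Hk1; lra.
have [g2p K2] := K t2 (le_trans T0t1 t2T).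
rewrite -/g -/A in K2 g2p.
have argp : 0 < (mu / ka) ^+ m * ((2 * rho)^-1 / A) * r.
  by rewrite !mulr_gt0 ?exprn_gt0 ?divr_gt0 ?invr_gt0 ?mulr_gt0.
apply: le_trans (_ : assoc_fun M (t2 / (A * g t2)) <= _).
  apply: om_mono => //.
  have e1 : (mu / ka) ^+ m * ((2 * rho)^-1 / A) * r =
      ((mu / ka) ^+ m * (2 * rho)^-1 * r) / A by rewrite mulrA mulrAC.
  have e2 : t2 / (A * g t2) = t2 / g t2 / A by rewrite invfM mulrA mulrAC.
  by rewrite e1 e2 ler_pM2r ?invr_gt0.
apply: le_trans K2 _; apply: le_trans F2 _.
have kk : 0 <= ka ^+ m by rewrite exprn_ge0 // ltW.
apply: le_trans (ler_wpM2l kk F1) _; lra.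
Qed.

Lemma powR_exp (R : realType) (a x : R) : 0 < a -> a `^ x = expR (x * ln a).
Proof. by move=> a0; rewrite -[LHS]lnK ?posrE ?powR_gt0 // ln_powR. Qed.

Lemma StepP (R : realType) (s : R -> R) g mu ka : 0 < g -> 1 < mu -> 0 < ka ->
  g * ln ka < ln mu -> Step s mu ka -> (exists T, forall t, T <= t -> 0 < s t) ->
  P_prop s g.
Proof.
move=> g0 mu1 ka0 H [t0 [t00 St]] [T HT].
have mu0 : 0 < mu by apply: lt_trans mu1.
exists (mu `^ g^-1); split.
  by rewrite powR_exp // expR_gt1 mulr_gt0 ?invr_gt0 ?ln_gt0.
have -> : (mu `^ g^-1) `^ g = mu by rewrite -powRrM mulVf ?gt_eqF // powRr1 // ltW.
apply: (@le_lt_trans _ _ ka%:E).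
  rewrite /limf_esup.
  apply: (@le_trans _ _ (ereal_sup ((fun t => (s (mu * t) / s t)%:E) @`
     [set t | Num.max t0 T < t]))).
    apply: ereal_inf_lbound; exists [set t | Num.max t0 T < t] => //.
    by exists (Num.max t0 T); split; [exact: num_real | move=> x].
  apply: ge_ereal_sup => _ [t /= Ht <-].
  rewrite lee_fin.
  have tt0 : t0 <= t by apply: ltW; apply: le_lt_trans Ht; rewrite le_max lexx.
  have tT : T <= t by apply: ltW; apply: le_lt_trans Ht; rewrite le_max lexx orbT.
  by rewrite ler_pdivrMr ?HT // St.
rewrite lte_fin powR_exp // -[X in X < _]lnK ?posrE // ltr_expR.
by rewrite mulrC ltr_pdivlMr // mulrC.
Qed.

Lemma PStep (R : realType) (s : R -> R) g : 0 < g -> P_prop s g ->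
  (exists T, forall t, T <= t -> 0 < s t) ->
  exists mu ka, [/\ 1 < mu, 1 < ka, g * ln ka < ln mu & Step s mu ka].
Proof.
move=> g0 [K [K1 HK]] [T HT].
have K0 : 0 < K by apply: lt_trans K1.
have [_ [V FV <-] yK] := ereal_inf_lt HK.
set y := ereal_sup _ in yK.
set ka := Num.max ((1 + K) / 2) ((fine y + K) / 2).
have fyK : fine y < K.
  move: yK; case: (y) => [r||] //=; by rewrite ?lte_fin.
have kaK : ka < K by rewrite gt_max; apply/andP; split; lra.
have ka1 : 1 < ka by rewrite lt_max; apply/orP; left; lra.
have yka : (y < ka%:E)%E.
  move: yK fyK; rewrite /ka; case: (y) => [r||] //= _ h.
  by rewrite lte_fin lt_max; apply/orP; right; lra.
  by rewrite ltNyr.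
exists (K `^ g); exists ka; split => //.
- by rewrite powR_exp // expR_gt1 mulr_gt0 ?ln_gt0.
- rewrite ln_powR ltr_pM2l // ltr_ln ?posrE //; lra.
case: FV => M [Mr HM].
exists (Num.max (Num.max (M + 1) T) 1); split; first by rewrite lt_max ltr01 orbT.
move=> t; rewrite !ge_max => /andP[/andP[tM tT] t1].
have st := HT t tT.
have Vt : V t by apply: HM; apply: lt_le_trans tM; rewrite ltrDl.
have : ((s (K `^ g * t) / s t)%:E <= y)%E.
  by apply: ereal_sup_ubound; exists t.
move=> /le_lt_trans /(_ yka); rewrite lte_fin ltr_pdivrMr // => h.
exact: ltW.
Qed.


Lemma arith_i (R : realFieldType) (g a lk lm N : R) :
  (g + 1) * a < N * (lm - g * lk) -> (g + 1) * (a + lk * N) < (lk + lm) * N.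
Proof. move=> H; lra. Qed.
Lemma arith_ii1 (R : realFieldType) (g lk lm lc X N : R) :
  X < N * (lm - g * lk) -> N * lk <= N * (g * lk) -> - lc <= X -> 0 < (lm - lk) * N + lc.
Proof. move=> H1 H2 H3; lra. Qed.
Lemma arith_ii2 (R : realFieldType) (g l2 lk lm lc X N : R) :
  X < N * (lm - g * lk) -> (g - 1) * l2 - lc <= X -> (g - 1) * (l2 + lk * N) < (lm - lk) * N + lc.
Proof. move=> H1 H2; lra. Qed.

Lemma gt1_ln (R : realType) (x : R) : 0 < x -> 0 < ln x -> 1 < x.
Proof. by move=> x0 h; rewrite -[x]lnK ?posrE // expR_gt1. Qed.

Lemma ln_div (R : realType) (x y : R) : 0 < x -> 0 < y -> ln (x / y) = ln x - ln y.
Proof. by move=> x0 y0; rewrite lnM ?posrE ?invr_gt0 // lnV ?posrE. Qed.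

Lemma dir_i (R : realType) (M : nat -> R) : (forall p, 0 < M p) -> M 0%N = 1 ->
  root_unbounded M -> root_unbounded (Mh M) ->
  forall mu0 ka0, Step (assoc_fun (Mh M)) mu0 ka0 -> 1 < mu0 -> 1 < ka0 -> ka0 < mu0 ->
  forall g, 0 < g -> P_prop (assoc_fun M) g -> P_prop (assoc_fun (Mh M)) (g + 1).
Proof.
move=> Mp M0 Mub Hub mu0 ka0 St0 mu01 ka01 kamu0 g g0 Pf.
have Hp := Mh_pos Mp.
have posf : exists T, forall t, T <= t -> 0 < assoc_fun M t.
  exists (M 1%N + 1) => t Tt; apply: om_pos => //; apply: lt_le_trans Tt; by rewrite ltrDl.
have posg : exists T, forall t, T <= t -> 0 < assoc_fun (Mh M) t.
  exists (M 1%N + 1) => t Tt; apply: om_pos => //=.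
  rewrite (_ : (1`!)%:R = 1 :> R) // mul1r; apply: lt_le_trans Tt; by rewrite ltrDl.
have [mu [ka [mu1 ka1 H St]]] := PStep g0 Pf posf.
have Sn := step_i Mp M0 Mub Hub St0 mu01 (lt_trans ltr01 ka01) kamu0 St (ltW mu1) (ltW ka1).
set A := expR 1 * mu0.
have A0 : 0 < A by rewrite mulr_gt0 ?expR_gt0 // (lt_trans ltr01).
have kap : 0 < ka by apply: lt_trans ka1.
have mup : 0 < mu by apply: lt_trans mu1.
set d := ln mu - g * ln ka.
have d0 : 0 < d by rewrite subr_gt0.
set a := ln (1 + A).
have [n Hn] := exists_nat_gt ((g + 1) * a / d).
have Hn' : (g + 1) * a < n.+1%:R * d.
  rewrite ltr_pdivrMr // in Hn; apply: lt_le_trans Hn _.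
  by rewrite ler_pM2r // ler_nat.
apply: (@StepP _ _ _ ((ka * mu) ^+ n.+1) ((1 + A) * ka ^+ n.+1)).
- by rewrite addr_gt0.
- have km : 1 < ka * mu.
    by apply: (lt_le_trans mu1); rewrite -[leLHS]mul1r ler_pM2r // ltW.
  rewrite exprS; apply: (lt_le_trans km); rewrite -[leLHS]mulr1 ler_pM2l ?(lt_trans ltr01) //.
  by apply: exprn_ege1; apply: ltW.
- by rewrite mulr_gt0 ?exprn_gt0 // addr_gt0.
- rewrite lnM ?posrE ?exprn_gt0 ?mulr_gt0 ?addr_gt0 // !lnXn ?mulr_gt0 //.
  rewrite lnM ?posrE // -/a.
  rewrite -[ln ka *+ _]mulr_natr -[(ln ka + ln mu) *+ _]mulr_natr; exact: arith_i.
- exact: Sn.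
- exact: posg.
Qed.

Lemma dir_ii (R : realType) (M : nat -> R) : (forall p, 0 < M p) -> M 0%N = 1 ->
  root_unbounded M -> root_unbounded (Mh M) ->
  forall g, 1 < g -> P_prop (assoc_fun (Mh M)) g -> P_prop (assoc_fun M) (g - 1).
Proof.
move=> Mp M0 Mub Hub g g1 Pg.
have Hp := Mh_pos Mp.
have g0 : 0 < g by apply: lt_trans g1.
have posf : exists T, forall t, T <= t -> 0 < assoc_fun M t.
  exists (M 1%N + 1) => t Tt; apply: om_pos => //; apply: lt_le_trans Tt; by rewrite ltrDl.
have posg : exists T, forall t, T <= t -> 0 < assoc_fun (Mh M) t.
  exists (M 1%N + 1) => t Tt; apply: om_pos => //=.
  rewrite (_ : (1`!)%:R = 1 :> R) // mul1r; apply: lt_le_trans Tt; by rewrite ltrDl.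
have [mu [ka [mu1 ka1 H St]]] := PStep g0 Pg posg.
have kap : 0 < ka by apply: lt_trans ka1.
have mup : 0 < mu by apply: lt_trans mu1.
have lk0 : 0 < ln ka by apply: ln_gt0.
have lkg : ln ka <= g * ln ka by rewrite ler_peMl // ltW.
have kamu : ka < mu.
  by rewrite -ltr_ln ?posrE //; apply: le_lt_trans H.
have [c [c0 Sm]] := step_ii Mp M0 Mub Hub St mu1 kap kamu.
set A := expR 1 * mu.
have A0 : 0 < A by rewrite mulr_gt0 ?expR_gt0.
have cA0 : 0 < c / A by rewrite divr_gt0.
set lc := ln (c / A).
set d := ln mu - g * ln ka.
have d0 : 0 < d by rewrite subr_gt0.
set X := `|(g - 1) * ln 2 - lc| + `|lc|.
have h1 : (g - 1) * ln 2 - lc <= X.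
  by apply: le_trans (ler_norm _) _; rewrite lerDl normr_ge0.
have h2 : - lc <= X.
  by apply: le_trans (ler_norm _) _; rewrite normrN lerDr normr_ge0.
have [m Hm] := exists_nat_gt (X / d).
have Hm' : X < m%:R * d by rewrite ltr_pdivrMr // in Hm.
have hg : m%:R * ln ka <= m%:R * (g * ln ka) by rewrite ler_wpM2l.
have rk : 0 < mu / ka by rewrite divr_gt0.
have lmf : ln ((mu / ka) ^+ m * (c / A)) = (ln mu - ln ka) * m%:R + lc.
  by rewrite lnM ?posrE ?exprn_gt0 // lnXn // ln_div // mulr_natr.
apply: (@StepP _ _ _ ((mu / ka) ^+ m * (c / A)) (2 * ka ^+ m)).
- by rewrite subr_gt0.
- apply: gt1_ln; first by rewrite mulr_gt0 ?exprn_gt0.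
  by rewrite lmf; apply: arith_ii1 Hm' hg h2.
- by rewrite mulr_gt0 ?exprn_gt0.
- rewrite lmf lnM ?posrE ?exprn_gt0 // lnXn // -[ln ka *+ _]mulr_natr.
  exact: arith_ii2 Hm' h1.
- exact: Sm.
- exact: posf.
Qed.

Unset Implicit Arguments.

Theorem corollary4p11 (R : realType) (M : nat -> R) :
  (forall p, 0 < M p) -> M 0%N = 1 ->
  weight_seq (fun p : nat => (p`!%:R * M p)%R) ->
  root_unbounded M ->
  (1%:E < gamma_index (assoc_fun (fun p : nat => (p`!%:R * M p)%R)))%E ->
  gamma_index (assoc_fun (fun p : nat => (p`!%:R * M p)%R))
    = (gamma_index (assoc_fun M) + 1%:E)%E.
Proof.
move=> Mp M0 [_ _ _ Hub] Mub Hgt.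
have Hp := Mh_pos Mp.
have posg : exists T, forall t, T <= t -> 0 < assoc_fun (fun p : nat => (p`!%:R * M p)%R) t.
  exists (M 1%N + 1) => t Tt; apply: om_pos => //=.
  rewrite (_ : (1`!)%:R = 1 :> R) // mul1r; apply: lt_le_trans Tt; by rewrite ltrDl.
have Hgt' := Hgt; rewrite /gamma_index in Hgt'.
have [y Sy y1] := ereal_sup_gt Hgt'.
case: Sy y1 => [->|[g1 [g10 Pg1] <-]] y1.
  by rewrite lte_fin ltr10 in y1.
have g11 : 1 < g1 by rewrite lte_fin in y1.
have [mu0 [ka0 [mu01 ka01 H0 St0]]] := PStep g10 Pg1 posg.
have kap : 0 < ka0 by apply: lt_trans ka01.
have mup : 0 < mu0 by apply: lt_trans mu01.
have lk0 : 0 < ln ka0 by apply: ln_gt0.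
have kamu0 : ka0 < mu0.
  rewrite -ltr_ln ?posrE //; apply: le_lt_trans H0.
  by rewrite ler_peMl // ltW.
have Di := dir_i Mp M0 Mub Hub St0 mu01 ka01 kamu0.
have Dii := dir_ii Mp M0 Mub Hub.
have F0 : (0 <= gamma_index (assoc_fun M))%E by apply: ereal_sup_ubound; left.
apply/eqP; rewrite eq_le; apply/andP; split.
- rewrite {1}/gamma_index; apply: ge_ereal_sup => x [->|[g [g0 Pg] <-]].
    by apply: adde_ge0.
  case: (lerP g 1) => hg.
    apply: le_trans (_ : 1%:E <= _)%E; first by rewrite lee_fin.
    by rewrite leeDr.
  have Pf := Dii g hg Pg.
  have : ((g - 1)%:E <= gamma_index (assoc_fun M))%E.
    apply: ereal_sup_ubound; right; exists (g - 1) => //; split => //.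
    by rewrite subr_gt0.
  move=> h; apply: le_trans (leeD2r 1%:E h).
  by rewrite -EFinD subrK.
- have f1 : (1%:E : \bar R) \is a fin_num by [].
  have H1 := ltW Hgt.
  clear Hgt Hgt' y1.
  rewrite -(leeBrDr _ _ f1) [in X in (X <= _)%E]/gamma_index. apply: ge_ereal_sup.
  move=> x [->|[g [g0 Pg] <-]].
    rewrite (leeBrDr _ _ f1) add0e. exact: H1.
  rewrite (leeBrDr _ _ f1) -EFinD. apply: ereal_sup_ubound. right. exists (g + 1). split.
    by rewrite addr_gt0.
    exact: Di.
  done.
Qed.
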